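(* Let $k,l\ge1$ with $k\ne l$, $1\le r\le(2k+1)(2l+1)$, $\mathcal{B}=\mathcal{B}(2k+1,2l+1;r)$ and $G=\langle H,V\rangle$. Then \[|\mathcal{O}_G(\mathcal{B})|=\frac14\left(\binom{(2k+1)(2l+1)}{r}+\binom{2kl+k+l}{\lfloor\frac r2\rfloor}+\sum_{t=0}^{r}\binom{2k+1}{t}\binom{2kl+l}{\frac{r-t}{2}}+\sum_{t=0}^{r}\binom{2l+1}{t}\binom{2kl+k}{\frac{r-t}{2}}\right).\]
   Context: $\mathcal{B}(2k+1,2l+1;r)$ is the set of all subsets of exactly $r$ cells (boards with $r$ blocked cells) of a grid with $2k+1$ rows and $2l+1$ columns. $\langle H,V\rangle=\{R_0,H,V,R_{180}\}$ is the group generated by the reflections $H$, $V$ across the horizontal and vertical midlines (with $R_{180}$ the 180-degree rotation), acting on boards; $\mathcal{O}_G(\mathcal{B})$ is the set of orbits. Convention: $\binom{a}{b}=0$ when $b$ is not a nonnegative integer or $b>a$. *)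

(* Defs.v *)
From mathcomp Require Import all_boot.
Set Implicit Arguments. Unset Strict Implicit. Unset Printing Implicit Defensive.

(* Cells of a grid with 2k+1 rows and 2l+1 columns: (row, column). *)
Definition cell (k l : nat) : finType := ('I_(2*k+1) * 'I_(2*l+1))%type.

Definition reflH k l (c : cell k l) : cell k l := (rev_ord c.1, c.2).
Definition reflV k l (c : cell k l) : cell k l := (c.1, rev_ord c.2).

(* The group <H,V> = {R0, H, V, R180}, indexed by (apply H?, apply V?):
   (false,false) = R0, (true,false) = H, (false,true) = V,
   (true,true) = R180 = H o V. *)
Definition hv_elt k l (g : bool * bool) : cell k l -> cell k l :=
  fun c => (if g.2 then @reflV k l else id) ((if g.1 then @reflH k l else id) c).

Definition boards k l r : {set {set cell k l}} := [set B : {set cell k l} | #|B| == r].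

Definition hv_orbit k l (B : {set cell k l}) : {set {set cell k l}} :=
  [set (@hv_elt k l g) @: B | g : bool * bool].

Definition hv_orbits k l r : {set {set {set cell k l}}} :=
  [set @hv_orbit k l B | B in boards k l r].

(* Binomial with the convention C(a, x/2) = 0 when x/2 is not an integer. *)
Definition binom_half (a x : nat) : nat := if odd x then 0 else 'C(a, x./2).

(* Main.v *)
Require Import Defs.
From mathcomp Require Import all_boot all_fingroup zify.
Set Implicit Arguments. Unset Strict Implicit. Unset Printing Implicit Defensive.

Lemma sum_eq_ind n m (f : nat -> nat) :
  \sum_(t < n) (m == (t : nat)) * f t = (m < n) * f m.
Proof.
elim: n => [|n IH]; first by rewrite big_ord0.
rewrite big_ord_recr /= IH.
case: (ltngtP m n) => [h|h|->].
- by rewrite ltnS (ltnW h) /= mul1n addn0.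
- by rewrite ltnS leqNgt h.
- by rewrite ltnS leqnn.
Qed.

Section Inv.
Variable T : finType.
Variable s : T -> T.
Hypothesis sK : involutive s.
Variable R : {set T}.
Hypothesis hR1 : forall x, x \in R -> s x \notin R.
Hypothesis hR2 : forall x, s x != x -> (x \in R) || (s x \in R).

Let F := [set x | s x == x].
Let s_inj : injective s := inv_inj sK.

Lemma RF x : x \in R -> s x != x.
Proof. by move=> xR; apply/eqP => e; move: (hR1 xR); rewrite e xR. Qed.

Definition gm (p : {set T} * {set T}) := p.1 :|: (p.2 :|: s @: p.2).

Lemma sQF (Q : {set T}) x : Q \subset R -> x \in s @: Q -> s x != x.
Proof.
move=> QR /imsetP[y yQ ->]; rewrite sK eq_sym.
by apply: RF; apply: (subsetP QR).
Qed.

Lemma card_gm (S Q : {set T}) : S \subset F -> Q \subset R -> #|gm (S, Q)| = #|S| + 2 * #|Q|.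
Proof.
move=> SF QR; rewrite /gm /=.
have h1 : Q :&: s @: Q = set0.
  apply/setP => x; rewrite !inE; apply/negbTE/andP => -[xQ /imsetP[y yQ e]].
  by move: (hR1 (subsetP QR y yQ)); rewrite -e (subsetP QR x xQ).
have h2 : S :&: (Q :|: s @: Q) = set0.
  apply/setP => x; rewrite !inE; apply/negbTE/andP => -[xS /orP[xQ|xsQ]].
    by move: (RF (subsetP QR x xQ)); move: (subsetP SF x xS); rewrite inE => ->.
  by move: (sQF QR xsQ); move: (subsetP SF x xS); rewrite inE => ->.
rewrite cardsU h2 cards0 subn0 cardsU h1 cards0 subn0 card_imset //.
by rewrite mul2n -addnn.
Qed.

Lemma inv_gm (S Q : {set T}) : S \subset F -> s @: gm (S, Q) = gm (S, Q).
Proof.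
move=> SF; rewrite /gm /= !imsetU -imset_comp.
have -> : s @: S = S.
  rewrite -[RHS]imset_id; apply: eq_in_imset => x xS.
  by move: (subsetP SF x xS); rewrite inE => /eqP.
have -> : [set (s \o s) x | x in Q] = Q.
  by rewrite -[RHS]imset_id; apply: eq_imset => x /=; rewrite sK.
by rewrite [Q :|: _]setUC.
Qed.

Lemma count_inv r :
  #|[set B : {set T} | (#|B| == r) && (s @: B == B)]| =
  \sum_(t < r.+1) 'C(#|F|, t) * binom_half #|R| (r - t).
Proof.
set D := [set p : {set T} * {set T} |
           [&& p.1 \subset F, p.2 \subset R & #|p.1| + 2 * #|p.2| == r]].
have -> : [set B : {set T} | (#|B| == r) && (s @: B == B)] = gm @: D.
  apply/setP => B; rewrite inE; apply/andP/imsetP.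
  - move=> [/eqP cB /eqP iB].
    have eB : B = gm (B :&: F, B :&: R).
      apply/setP => x; rewrite /gm /= !inE; apply/idP/idP.
      + move=> xB; rewrite xB /=.
        case: (eqVneq (s x) x) => [_|ne] //=.
        case/orP: (hR2 ne) => [->//|sxR]; rewrite /=.
        apply/orP; right; apply/imsetP; exists (s x); last by rewrite sK.
        by rewrite !inE sxR -iB andbT; apply/imsetP; exists x.
      + case/orP => [/andP[]//|/orP[/andP[]//|/imsetP[y]]].
        by rewrite !inE => /andP[yB _] ->; rewrite -iB; apply/imsetP; exists y.
    exists (B :&: F, B :&: R) => //.
    by rewrite inE /= !subsetIr /= -card_gm ?subsetIr // -eB cB.
  - move=> [[S Q]]; rewrite inE /= => /and3P[SF QR /eqP c] ->.
    by rewrite card_gm // c eqxx inv_gm.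
rewrite card_in_imset; last first.
  move=> [S1 Q1] [S2 Q2]; rewrite !inE /= => /and3P[SF1 QR1 _] /and3P[SF2 QR2 _] e.
  have kS (S Q : {set T}) : S \subset F -> Q \subset R -> gm (S, Q) :&: F = S.
    move=> SF QR; apply/setP => x; rewrite /gm /= !inE.
    apply/idP/idP => [/andP[/orP[//|/orP[xQ|xsQ]] fx]|xS].
    - by move: (RF (subsetP QR x xQ)); rewrite fx.
    - by move: (sQF QR xsQ); rewrite fx.
    - by rewrite xS /=; move: (subsetP SF x xS); rewrite inE.
  have kQ (S Q : {set T}) : S \subset F -> Q \subset R -> gm (S, Q) :&: R = Q.
    move=> SF QR; apply/setP => x; rewrite /gm /= !inE.
    case xQ: (x \in Q); first by rewrite orbT (subsetP QR x xQ).
    rewrite /=; apply/negbTE/andP => -[/orP[xS|xsQ] xR].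
      by move: (RF xR); move: (subsetP SF x xS); rewrite inE => ->.
    case/imsetP: xsQ => y yQ ex.
    by move: (hR1 (subsetP QR y yQ)); rewrite -ex xR.
  have h1 := kS _ _ SF1 QR1; have h2 := kQ _ _ SF1 QR1.
  by rewrite e kS // in h1; rewrite e kQ // in h2; rewrite h1 h2.
rewrite -[#|D|]sum1_card.
under eq_bigl => p do rewrite inE.
rewrite -(pair_big_dep (fun S : {set T} => S \subset F) (fun (S Q : {set T}) => (Q \subset R) && (#|S| + 2 * #|Q| == r)) (fun _ _ => 1)) /=.
set c := fun m => \sum_(Q : {set T} | (Q \subset R) && (m + 2 * #|Q| == r)) 1.
have cE m : c m = (m < r.+1) * binom_half #|R| (r - m).
  rewrite /c sum1_card.
  case: (leqP m r) => hm; last first.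
    rewrite ltnS leqNgt hm /= mul0n; apply: eq_card0 => Q /=.
    by apply/negbTE; rewrite negb_and; apply/orP; right; apply/negP => /eqP; lia.
  rewrite ltnS hm mul1n /binom_half; case: ifP => od.
    apply: eq_card0 => Q /=.
    apply/negbTE; rewrite negb_and; apply/orP; right; apply/negP => /eqP e.
    by move: od; rewrite -e addKn oddM.
  rewrite -cards_draws; apply: eq_card => Q; rewrite !inE /=; congr (_ && _).
  have := odd_double_half (r - m); rewrite od add0n -mul2n => e.
  apply/eqP/eqP => h; first by lia.
  by rewrite h; lia.
rewrite (eq_bigr (fun S : {set T} => c #|S|)) //.
under eq_bigr => S _ do rewrite cE -(sum_eq_ind r.+1 #|S| (fun m => binom_half #|R| (r - m))).
rewrite exchange_big /=; apply: eq_bigr => t _.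
rewrite -big_distrl /=; congr (_ * _).
rewrite -cards_draws -sum1_card big_mkcond [RHS]big_mkcond /=.
apply: eq_bigr => S _; rewrite !inE.
by case: (S \subset F).
Qed.
End Inv.

Lemma card_lt n m : m <= n -> #|[set i : 'I_n | i < m]| = m.
Proof.
move=> h; have -> : [set i : 'I_n | i < m] = [set widen_ord h i | i : 'I_m].
  apply/setP => i; rewrite !inE; apply/idP/imsetP => [im|[j _ ->]] //=.
  by exists (Ordinal im) => //; apply: val_inj.
by rewrite card_imset ?card_ord // => a b /(congr1 val) /= /val_inj.
Qed.

Lemma card_eqv n m : m < n -> #|[set i : 'I_n | val i == m]| = 1.
Proof.
move=> h; have -> : [set i : 'I_n | val i == m] = [set Ordinal h].
  by apply/setP => i; rewrite !inE -val_eqE.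
by rewrite cards1.
Qed.


Section C.
Variables k l : nat.
Lemma hv_invol g : involutive (@hv_elt k l g).
Proof. by move=> [i j]; case: g => [[] []]; rewrite /hv_elt /reflH /reflV /= ?rev_ordK. Qed.
Definition pg g : {perm cell k l} := perm (inv_inj (hv_invol g)).
Definition Gs := [set pg g | g : bool * bool].
Lemma pgM g1 g2 : (pg g1 * pg g2)%g = pg (g1.1 (+) g2.1, g1.2 (+) g2.2).
Proof.
apply/permP => c; rewrite permM !permE.
by case: g1 g2 c => [[] []] [[] []] [i j]; rewrite /hv_elt /reflH /reflV /= ?rev_ordK.
Qed.
Lemma pg1 : pg (false,false) = 1%g.
Proof. by apply/permP => c; rewrite permE perm1; case: c. Qed.
Lemma Gs_group : group_set Gs.
Proof.
apply/group_setP; split; first by apply/imsetP; exists (false,false); rewrite ?pg1.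
by move=> _ _ /imsetP[g1 _ ->] /imsetP[g2 _ ->]; rewrite pgM; apply/imsetP; eexists.
Qed.
Definition GG := Group Gs_group.
Lemma fixE r g : #|('Fix_(boards k l r | 'P^*)[pg g])%g| = #|[set B : {set cell k l} | (#|B| == r) && (@hv_elt k l g @: B == B)]|.
Proof.
apply: eq_card => B; rewrite !inE sub1set !inE /=.
congr (_ && (_ == _)); rewrite /= /setact; apply: eq_imset => x.
by rewrite /= apermE /pg permE.
Qed.

Lemma acts_boards r : [acts GG, on boards k l r | 'P^*].
Proof.
apply/actsP => a _ B; rewrite !inE /= /setact card_imset //.
by move=> x y /=; apply: perm_inj.
Qed.

Lemma orbitsE r : hv_orbits k l r = orbit 'P^* GG @: boards k l r.
Proof.
apply: eq_imset => B; rewrite /orbit /hv_orbit /= /Gs -imset_comp.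
apply: eq_imset => g /=; rewrite /setact; apply: eq_imset => x.
by rewrite /= apermE /pg permE.
Qed.

Lemma pg_inj : 1 <= k -> 1 <= l -> injective pg.
Proof.
move=> hk hl g1 g2 e.
have h0k : 0 < 2*k+1 by rewrite addn1.
have h0l : 0 < 2*l+1 by rewrite addn1.
have := congr1 (fun p : {perm cell k l} => p (Ordinal h0k, Ordinal h0l)) e.
rewrite /= /pg !permE.
case: g1 g2 {e} => [[] []] [[] []] //=; rewrite /hv_elt /reflH /reflV /= => /eqP;
  rewrite xpair_eqE -!val_eqE /= => h; exfalso; move: h; lia.
Qed.

Lemma card_G : 1 <= k -> 1 <= l -> #|Gs| = 4.
Proof. by move=> hk hl; rewrite card_imset ?card_prod ?card_bool //; apply: pg_inj. Qed.

Lemma fixFF r : #|[set B : {set cell k l} | (#|B| == r) && (@hv_elt k l (false,false) @: B == B)]| = 'C((2*k+1)*(2*l+1), r).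
Proof.
have -> : (2*k+1)*(2*l+1) = #|{: cell k l}| by rewrite card_prod !card_ord.
rewrite -card_draws.
apply: eq_card => B; rewrite !inE.
have -> : @hv_elt k l (false,false) @: B = B.
  by rewrite -[RHS]imset_id; apply: eq_imset.
by rewrite eqxx andbT.
Qed.

Lemma fixH r : #|[set B : {set cell k l} | (#|B| == r) && (@hv_elt k l (true,false) @: B == B)]| =
  \sum_(t < r.+1) 'C(2*l+1, t) * binom_half (2*k*l + k) (r - t).
Proof.
have h1 : forall c, c \in [set c : cell k l | c.1 < k] -> @hv_elt k l (true,false) c \notin [set c : cell k l | c.1 < k].
  move=> [i j]; rewrite !inE /hv_elt /reflH /=; have := ltn_ord i; lia.
have h2 : forall c, @hv_elt k l (true,false) c != c -> (c \in [set c : cell k l | c.1 < k]) || (@hv_elt k l (true,false) c \in [set c : cell k l | c.1 < k]).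
  move=> [i j]; rewrite !inE /hv_elt /reflH /= xpair_eqE eqxx andbT -val_eqE /=; have := ltn_ord i; lia.
rewrite (count_inv (hv_invol (true,false)) h1 h2 r).
have -> : [set c : cell k l | @hv_elt k l (true,false) c == c] = setX [set i : 'I_(2*k+1) | val i == k] setT.
  apply/setP => -[i j]; rewrite !inE /hv_elt /reflH /= xpair_eqE eqxx andbT -val_eqE /=.
  have := ltn_ord i; lia.
have -> : [set c : cell k l | c.1 < k] = setX [set i : 'I_(2*k+1) | i < k] setT.
  by apply/setP => -[i j]; rewrite !inE andbT.
rewrite !cardsX cardsT card_ord card_eqv ?card_lt; try lia.
by rewrite mul1n (_ : k * (2*l+1) = 2*k*l + k) //; lia.
Qed.

Lemma fixV r : #|[set B : {set cell k l} | (#|B| == r) && (@hv_elt k l (false,true) @: B == B)]| =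
  \sum_(t < r.+1) 'C(2*k+1, t) * binom_half (2*k*l + l) (r - t).
Proof.
have h1 : forall c, c \in [set c : cell k l | c.2 < l] -> @hv_elt k l (false,true) c \notin [set c : cell k l | c.2 < l].
  move=> [i j]; rewrite !inE /hv_elt /reflV /=; have := ltn_ord j; lia.
have h2 : forall c, @hv_elt k l (false,true) c != c -> (c \in [set c : cell k l | c.2 < l]) || (@hv_elt k l (false,true) c \in [set c : cell k l | c.2 < l]).
  move=> [i j]; rewrite !inE /hv_elt /reflV /= xpair_eqE eqxx /= -val_eqE /=; have := ltn_ord j; lia.
rewrite (count_inv (hv_invol (false,true)) h1 h2 r).
have -> : [set c : cell k l | @hv_elt k l (false,true) c == c] = setX setT [set j : 'I_(2*l+1) | val j == l].
  apply/setP => -[i j]; rewrite !inE /hv_elt /reflV /= xpair_eqE eqxx /= -val_eqE /=.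
  have := ltn_ord j; lia.
have -> : [set c : cell k l | c.2 < l] = setX setT [set j : 'I_(2*l+1) | j < l].
  by apply/setP => -[i j]; rewrite !inE.
rewrite !cardsX cardsT card_ord card_eqv ?card_lt; try lia.
by rewrite muln1 (_ : (2*k+1) * l = 2*k*l + l) //; lia.
Qed.

Lemma fixR r : 1 <= r -> #|[set B : {set cell k l} | (#|B| == r) && (@hv_elt k l (true,true) @: B == B)]| =
  'C(2*k*l + k + l, r./2).
Proof.
move=> hr.
pose R := [set c : cell k l | (c.1 < k) || ((val c.1 == k) && (c.2 < l))].
have h1 : forall c, c \in R -> @hv_elt k l (true,true) c \notin R.
  move=> [i j]; rewrite !inE /hv_elt /reflH /reflV /=; have := ltn_ord i; have := ltn_ord j; lia.
have h2 : forall c, @hv_elt k l (true,true) c != c -> (c \in R) || (@hv_elt k l (true,true) c \in R).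
  move=> [i j]; rewrite !inE /hv_elt /reflH /reflV /= xpair_eqE -!val_eqE /=; have := ltn_ord i; have := ltn_ord j; lia.
rewrite (count_inv (hv_invol (true,true)) h1 h2 r).
have -> : [set c : cell k l | @hv_elt k l (true,true) c == c] = setX [set i : 'I_(2*k+1) | val i == k] [set j : 'I_(2*l+1) | val j == l].
  apply/setP => -[i j]; rewrite !inE /hv_elt /reflH /reflV /= xpair_eqE -!val_eqE /=.
  have := ltn_ord i; have := ltn_ord j; lia.
have -> : R = setX [set i : 'I_(2*k+1) | i < k] setT :|: setX [set i : 'I_(2*k+1) | val i == k] [set j : 'I_(2*l+1) | j < l].
  by apply/setP => -[i j]; rewrite !inE andbT.
rewrite cardsU.
have -> : setX [set i : 'I_(2*k+1) | i < k] setT :&: setX [set i : 'I_(2*k+1) | val i == k] [set j : 'I_(2*l+1) | j < l] = set0.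
  apply/setP => -[i j]; rewrite !inE /=; lia.
rewrite cards0 subn0 !cardsX cardsT card_ord !card_eqv ?card_lt; try lia.
have -> : k * (2 * l + 1) + 1 * l = 2*k*l + k + l by lia.
case: r hr => [//|s] _.
rewrite big_ord_recl big_ord_recl big1 => [|i _]; last by rewrite bin_small.
rewrite /= bin0 bin1 !mul1n addn0 subn0 subSS subn0 /binom_half /=.
rewrite uphalf_half; case: (odd s) => /=; by rewrite ?add0n ?addn0.
Qed.

End C.

Theorem proposition5p4 (k l r : nat) :
  1 <= k -> 1 <= l -> k != l -> 1 <= r <= (2*k+1)*(2*l+1) ->
  4 * #|hv_orbits k l r| =
    'C((2*k+1)*(2*l+1), r)
    + 'C(2*k*l + k + l, r./2)
    + \sum_(0 <= t < r.+1) 'C(2*k+1, t) * binom_half (2*k*l + l) (r - t)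
    + \sum_(0 <= t < r.+1) 'C(2*l+1, t) * binom_half (2*k*l + k) (r - t).
Proof.
move=> hk hl _ /andP[hr _].
have FC := Frobenius_Cauchy (acts_boards k l r).
rewrite -orbitsE /= card_G // in FC.
rewrite mulnC -FC /Gs big_imset /=; last by move=> g1 g2 _ _; apply: pg_inj.
set Fx := fun i => #|('Fix_(boards k l r | 'P^*)[pg k l i])%g|.
transitivity (\sum_(a : bool) \sum_(b : bool) Fx (a, b)).
  by rewrite pair_big; apply: eq_bigr => -[a b].
rewrite !big_bool /Fx /= !fixE fixFF fixH fixV fixR // !big_mkord.
lia.
Qed.
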